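(* Let $K_n$, $C_n$ and $W_n$ be, respectively, the complete graph, the cycle and the wheel on $n\geq 3$ vertices. Then for every integer $k$ with $3\leq k\leq n$, $px_k(K_n)=px_k(C_n)=px_k(W_n)=2$.
   Context: All graphs are finite, simple, undirected and connected. An edge-coloring of a graph assigns a color to each edge (adjacent edges may receive the same color). A tree in an edge-colored graph is proper if any two adjacent edges of the tree receive different colors. For $S\subseteq V(G)$, an $S$-tree is a subgraph of $G$ that is a tree containing all vertices of $S$. For a connected graph $G$ of order $n$ and an integer $k$ with $2\le k\le n$, an edge-coloring of $G$ is a $k$-proper coloring if for every set $S$ of $k$ vertices of $G$ there exists a proper $S$-tree in $G$. The $k$-proper index $px_k(G)$ is the minimum number of colors used in a $k$-proper coloring of $G$. The wheel $W_n$ on $n$ vertices consists of a cycle on $n-1$ vertices together with one additional vertex adjacent to all vertices of that cycle. *)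

(* Defs.v *)
From mathcomp Require Import all_boot.
Set Implicit Arguments. Unset Strict Implicit. Unset Printing Implicit Defensive.

(* A graph on a finite vertex type T is given by an adjacency relation
   e : rel T (symmetric, irreflexive for the concrete graphs below).
   An edge-coloring is a function c : T -> T -> nat, symmetric on edges;
   the color of edge {x,y} is c x y. *)

Definition edge_coloring (T : finType) (e : rel T) (c : T -> T -> nat) : Prop :=
  forall x y, e x y -> c x y = c y x.

Definition colors_used (T : finType) (e : rel T) (c : T -> T -> nat) : nat :=
  size (undup [seq c x y | x <- enum T, y <- [seq y <- enum T | e x y]]).

Definition subgraph (T : finType) (e : rel T) (VS : {set T}) (ES : rel T) : Prop :=
  (forall x y, ES x y = ES y x) /\
  (forall x y, ES x y -> [&& e x y, x \in VS & y \in VS]).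

Definition is_tree (T : finType) (VS : {set T}) (ES : rel T) : Prop :=
  VS != set0 /\
  (forall x y, x \in VS -> y \in VS -> connect ES x y) /\
  (forall s : seq T, 3 <= size s -> uniq s -> ~~ cycle ES s).

Definition proper_tree (T : finType) (c : T -> T -> nat) (ES : rel T) : Prop :=
  forall x y z, ES x y -> ES x z -> y != z -> c x y != c x z.

Definition k_proper_coloring (T : finType) (e : rel T) (k : nat)
  (c : T -> T -> nat) : Prop :=
  edge_coloring e c /\
  forall S : {set T}, #|S| = k ->
    exists (VS : {set T}) (ES : rel T),
      subgraph e VS ES /\ is_tree VS ES /\ S \subset VS /\ proper_tree c ES.

Definition px_eq (T : finType) (e : rel T) (k m : nat) : Prop :=
  (exists c, k_proper_coloring e k c /\ colors_used e c = m) /\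
  (forall c, k_proper_coloring e k c -> m <= colors_used e c).

Definition complete_graph (n : nat) : rel 'I_n := fun i j => i != j.

Definition cycle_graph (n : nat) : rel 'I_n :=
  fun i j => (i != j) &&
    ((val j == (val i).+1 %% n) || (val i == (val j).+1 %% n)).

(* wheel: hub is vertex n-1, rim is the cycle 0 - 1 - ... - (n-2) - 0 *)
Definition wheel_graph (n : nat) : rel 'I_n :=
  fun i j => (i != j) &&
    [|| val i == n.-1, val j == n.-1,
        (val j == (val i).+1 %% n.-1) | (val i == (val j).+1 %% n.-1)].

Arguments complete_graph n : clear implicits.
Arguments cycle_graph n : clear implicits.
Arguments wheel_graph n : clear implicits.

(* Main.v *)
Require Import Defs.
From mathcomp Require Import all_boot.
From mathcomp Require Import zify.

Definition pe (n : nat) : rel 'I_n :=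
  fun i j => (nat_of_ord j == (nat_of_ord i).+1) || (nat_of_ord i == (nat_of_ord j).+1).
Definition pc (n : nat) (i j : 'I_n) : nat := (minn i j) %% 2.

Lemma pe_sym n : symmetric (pe n).
Proof. by move=> i j; rewrite /pe orbC. Qed.

Lemma pe_connect n (i j : 'I_n) : connect (pe n) i j.
Proof.
wlog le : i j / nat_of_ord i <= nat_of_ord j.
  move=> H; case: (leqP (nat_of_ord i) (nat_of_ord j)) => h; first exact: H.
  rewrite (sym_connect_sym (@pe_sym n)); apply: H; exact: ltnW.
have : exists m, nat_of_ord j = nat_of_ord i + m by exists (nat_of_ord j - nat_of_ord i); lia.
case=> m; elim: m j {le} => [|m IH] j hj.
  by have -> : j = i by apply: val_inj; rewrite /= hj addn0.
have hj' : nat_of_ord i + m < n by have := ltn_ord j; lia.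
apply: (connect_trans (IH (Ordinal hj') _)) => //.
apply: connect1; rewrite /pe /=; apply/orP; left; apply/eqP; lia.
Qed.

Lemma max_in (T : eqType) (f : T -> nat) (s : seq T) (x0 : T) : x0 \in s ->
  exists2 x, x \in s & forall y, y \in s -> f y <= f x.
Proof.
elim: s x0 => [//|a s IH] x0 _.
case: s IH => [|b s] IH.
  by exists a => [|y]; rewrite ?mem_seq1 ?inE // => /eqP ->.
have [x xin xmax] := IH b (mem_head _ _).
case: (leqP (f a) (f x)) => h.
  exists x; first by rewrite inE xin orbT.
  by move=> y; rewrite inE => /orP[/eqP ->|]; [|exact: xmax].
exists a; first exact: mem_head.
move=> y; rewrite inE => /orP[/eqP ->//|/xmax]; lia.
Qed.

Lemma pe_acyclic n (s : seq 'I_n) : 3 <= size s -> uniq s -> ~~ cycle (pe n) s.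
Proof.
move=> hs us; apply/negP => cs.
case: s hs us cs => [//|a s0] hs us cs.
have [x xin xmax] := @max_in _ (fun i : 'I_n => nat_of_ord i) (a :: s0) a (mem_head _ _).
move: hs us cs xmax; case/splitPr: xin => s1 s2 hs us cs xmax.
rewrite -(rot_cycle (size s1)) rot_size_cat in cs.
rewrite -(rot_uniq (size s1)) rot_size_cat in us.
have hmem : forall y, y \in (x :: s2) ++ s1 -> y \in s1 ++ x :: s2.
  by move=> y; rewrite !mem_cat !inE; case: (y \in s1); case: (y == x); case: (y \in s2).
move: hs; rewrite size_cat /= => hs.
move: cs us hmem; rewrite cat_cons.
have : 2 <= size (s2 ++ s1).
  by rewrite size_cat; move: hs; rewrite addnS ltnS addnC.
case: (s2 ++ s1) => [//|y [//|w u]] _ cs us hmem.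
rewrite /= rcons_path in cs.
case/and4P: cs => hxy _ _ hzx.
rewrite /= in hzx.
have zin : last w u \in w :: u by exact: mem_last.
move: (last w u) zin hzx => z zin hzx.
have yz : y != z.
  apply/negP => /eqP e; move: us; rewrite /= e zin /=.
  by rewrite andbF.
have hy : nat_of_ord y <= nat_of_ord x by apply: xmax; apply: hmem; rewrite !inE eqxx orbT.
have hz : nat_of_ord z <= nat_of_ord x.
  by apply: xmax; apply: hmem; rewrite inE /= inE zin !orbT.
move: hxy hzx; rewrite /pe => /orP[/eqP h1|/eqP h1] /orP[/eqP h2|/eqP h2]; try lia.
have e : y = z by apply: val_inj; rewrite /=; lia.
by rewrite e eqxx in yz.
Qed.

Lemma pe_proper n : proper_tree (@pc n) (pe n).
Proof.
move=> x y z; rewrite /pe /pc => h1 h2 /eqP yz.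
have yz' : nat_of_ord y <> nat_of_ord z by move=> e; apply: yz; apply: val_inj.
move: h1 h2 => /orP[/eqP h1|/eqP h1] /orP[/eqP h2|/eqP h2]; lia.
Qed.

Lemma pe_edge_gen n (e : rel 'I_n) :
  (forall i j : 'I_n, nat_of_ord j = (nat_of_ord i).+1 -> e i j) ->
  (forall i j, e i j = e j i) ->
  forall i j, pe n i j -> e i j.
Proof.
move=> H sym i j /orP[/eqP h|/eqP h]; first exact: H.
by rewrite sym; apply: H.
Qed.

Lemma neq_ord n (i j : 'I_n) : nat_of_ord i <> nat_of_ord j -> i != j.
Proof. by move=> h; apply/eqP => e; apply: h; rewrite e. Qed.

Lemma complete_pe n i j : pe n i j -> complete_graph n i j.
Proof.
apply: pe_edge_gen.
  by move=> a b h; rewrite /complete_graph; apply: neq_ord; lia.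
by move=> a b; rewrite /complete_graph eq_sym.
Qed.

Lemma cycle_pe n i j : pe n i j -> cycle_graph n i j.
Proof.
apply: pe_edge_gen.
  move=> a b h; rewrite /cycle_graph neq_ord /=; last lia.
  rewrite modn_small; first by rewrite h eqxx.
  by rewrite -h.
by move=> a b; rewrite /cycle_graph eq_sym orbC.
Qed.

Lemma wheel_pe n i j : pe n i j -> wheel_graph n i j.
Proof.
apply: pe_edge_gen.
  move=> a b h; rewrite /wheel_graph neq_ord /=; last lia.
  case: (boolP (nat_of_ord b == n.-1)) => hb; first by rewrite orbT.
  have hb' : nat_of_ord b < n.-1 by have := ltn_ord b; lia.
  rewrite modn_small; first by rewrite h eqxx !orbT.
  by rewrite -h.
move=> a b; rewrite /wheel_graph eq_sym; congr (_ && _).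
by case: (nat_of_ord a == n.-1); case: (nat_of_ord b == n.-1);
  case: (_ == _ %% _); case: (_ == _ %% _).
Qed.

Lemma color_in (T : finType) (e : rel T) (c : T -> T -> nat) x y : e x y ->
  c x y \in undup [seq c x y | x <- enum T, y <- [seq y <- enum T | e x y]].
Proof.
move=> h; rewrite mem_undup; apply/allpairsPdep; exists x, y.
by rewrite mem_enum mem_filter h mem_enum.
Qed.

Lemma colors_ge2 (T : finType) (e : rel T) (c : T -> T -> nat) x y z :
  e x y -> e x z -> c x y != c x z -> 2 <= colors_used e c.
Proof.
move=> h1 h2 h3; rewrite /colors_used.
have := @uniq_leq_size _ [:: c x y; c x z] (undup [seq c x y | x <- enum T, y <- [seq y <- enum T | e x y]]).
apply => //=; first by rewrite inE h3.
move=> v; rewrite !inE => /orP[/eqP->|/eqP->]; exact: color_in.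
Qed.

Lemma no_branch (T : finType) (ES : rel T) (sym : forall x y, ES x y = ES y x)
  (nb : forall x y z, ES x y -> ES x z -> y = z) x y :
  connect ES x y -> x = y \/ ES x y.
Proof.
case/connectP => p; elim: p x => [|x1 p IH] x /=; first by move=> _ ->; left.
case/andP => hx hp hy; case: (IH x1 hp hy) => [<-|h]; first by right.
left; apply: (nb x1); first by rewrite sym.
done.
Qed.

Lemma lower n k (hk3 : 3 <= k) (hkn : k <= n) (e : rel 'I_n) c :
  k_proper_coloring e k c -> 2 <= colors_used e c.
Proof.
case=> _ H.
pose S := [set widen_ord hkn i | i : 'I_k].
have cS : #|S| = k.
  rewrite card_imset ?cardsT ?card_ord // => i j /(congr1 val) /= h; exact: val_inj.
have [VS [ES [[sym sub] [[_ [conn _]] [sS prop]]]]] := H S cS.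
have h0 : 0 < k by lia.
have h1 : 1 < k by lia.
have h2 : 2 < k by lia.
pose a := widen_ord hkn (Ordinal h0).
pose b := widen_ord hkn (Ordinal h1).
pose d := widen_ord hkn (Ordinal h2).
have inV : forall i, widen_ord hkn i \in VS.
  by move=> i; apply: (subsetP sS); apply/imsetP; exists i.
case: (boolP [exists x, exists y, exists z, [&& ES x y, ES x z & y != z]]).
  case/existsP => x /existsP [y /existsP [z /and3P [hy hz yz]]].
  apply: (@colors_ge2 _ _ _ x y z).
  - by case/and3P: (sub _ _ hy).
  - by case/and3P: (sub _ _ hz).
  exact: prop.
move=> hn.
have nb : forall x y z, ES x y -> ES x z -> y = z.
  move=> x y z hy hz; apply/eqP; apply: contraNT hn => yz.
  by apply/existsP; exists x; apply/existsP; exists y; apply/existsP; exists z;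
    rewrite hy hz yz.
have [ab|ab] := @no_branch _ _ sym nb _ _ (conn a b (inV _) (inV _)).
  by move/(congr1 val): ab.
have [ad|ad] := @no_branch _ _ sym nb _ _ (conn a d (inV _) (inV _)).
  by move/(congr1 val): ad.
by move: (nb _ _ _ ab ad) => /(congr1 val).
Qed.

Lemma upper n k (hn : 3 <= n) (e : rel 'I_n) (hE : forall i j, pe n i j -> e i j) :
  exists c, k_proper_coloring e k c /\ colors_used e c = 2.
Proof.
exists (@pc n); split.
  split; first by move=> x y _; rewrite /pc minnC.
  move=> S _; exists setT, (pe n); split.
    split; first exact: pe_sym.
    by move=> x y h; rewrite hE ?in_setT.
  split.
    split.
      have h0 : 0 < n by lia.
      by apply/set0Pn; exists (Ordinal h0); rewrite in_setT.
    split; first by move=> x y _ _; exact: pe_connect.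
    by move=> s hs us; exact: pe_acyclic.
  by split; [exact: subsetT | exact: pe_proper].
have h0 : 0 < n by lia.
have h1 : 1 < n by lia.
have h2 : 2 < n by lia.
apply/anti_leq/andP; split.
  rewrite /colors_used.
  have := @uniq_leq_size _ (undup [seq @pc n x y | x <- enum 'I_n, y <- [seq y <- enum 'I_n | e x y]]) [:: 0; 1].
  apply; first exact: undup_uniq.
  move=> v; rewrite mem_undup => /allpairsPdep [x [y [_ _ ->]]].
  rewrite /pc !inE; have := ltn_pmod (minn x y) (isT : 0 < 2).
  by case: (minn x y %% 2) => [|[|]].
apply: (@colors_ge2 _ _ _ (Ordinal h1) (Ordinal h0) (Ordinal h2)).
- by apply: hE; rewrite /pe /=.
- by apply: hE; rewrite /pe /=.
by rewrite /pc.
Qed.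

Theorem mainTheorem8 (n k : nat) (hn : 3 <= n) (hk3 : 3 <= k) (hkn : k <= n) :
  px_eq (complete_graph n) k 2 /\
  px_eq (cycle_graph n) k 2 /\
  px_eq (wheel_graph n) k 2.
Proof.
split; [|split]; (split; [apply: upper => //| move=> c; exact: lower hk3 hkn _ c]).
- exact: complete_pe.
- exact: cycle_pe.
- exact: wheel_pe.
Qed.
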